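(* Let $n\ge 0$. Every cycle $C$ in the (unweighted) diamond graph $D_n$ is a principal cycle of some subdiamond of $D_n$. Moreover, every principal cycle of a subdiamond of height $2^t$ has length $2^{t+1}$.
   Context: Diamond graphs: $D_0$ consists of two vertices joined by an edge of length $1$; $D_n$ is obtained from $D_{n-1}$ by replacing every edge $uv$ by a quadrilateral $u,a,v,b$ with edges $ua,av,vb,bu$; all edges have length $1$ and $D_n$ carries its shortest-path metric. Call one vertex of $D_0$ the top and the other the bottom; the top (bottom) of $D_n$ is the vertex that evolved from the top (bottom) of $D_0$. A subdiamond of $D_n$ is a subgraph which evolved (through the successive replacements) from a single edge of some $D_k$, $0\le k\le n$. The top (bottom) of a subdiamond $S$ is its vertex closest to the top (bottom) of $D_n$; the height of $S$ is the distance between its top and bottom. When a subdiamond $S$ evolves from an edge $uv$, the first replacement step produces a quadrilateral $u,a,v,b$; the vertex of $S$ corresponding to $a$ is called the leftmost vertex and the one corresponding to $b$ the rightmost vertex of $S$. A principal cycle of $S$ is a cycle consisting of a path in $S$ from the top to the bottom of $S$ passing through the leftmost vertex together with a path in $S$ from the bottom to the top passing through the rightmost vertex. *)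

(* Defs.v *)
From HB Require Import structures.
From mathcomp Require Import all_boot.
Set Implicit Arguments. Unset Strict Implicit. Unset Printing Implicit Defensive.

(* An edge of D_n is encoded by a word of length n over letters
   (side, lower) : bool * bool, describing the successive replacements:
   when an edge uv (u the top end, v the bottom end) of D_k is replaced by
   the quadrilateral u,a,v,b, the letter (false, _) selects the left new
   vertex a, (true, _) the right new vertex b; (_, false) selects the upper
   edge (u to a/b) and (_, true) the lower edge (a/b to v).
   Vertices: Top, Bot, and Mid w s = the new vertex (left if s = false,
   right if s = true) created when replacing the edge w of D_(size w). *)

Definition letter := (bool * bool)%type.

Inductive vtx : Type :=
| Top : vtx
| Bot : vtx
| Mid : seq letter -> bool -> vtx.

Definition vtx_code (x : vtx) : (bool + (seq letter * bool))%type :=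
  match x with Top => inl true | Bot => inl false | Mid w s => inr (w, s) end.
Definition vtx_decode (c : (bool + (seq letter * bool))%type) : vtx :=
  match c with inl true => Top | inl false => Bot | inr (w, s) => Mid w s end.
Lemma vtx_codeK : cancel vtx_code vtx_decode. Proof. by case. Qed.
HB.instance Definition _ := Equality.copy vtx (can_type vtx_codeK).

(* endpoints (top end, bottom end) of the edge / subdiamond with word w *)
Fixpoint ends_aux (pre : seq letter) (uv : vtx * vtx) (w : seq letter)
  : vtx * vtx :=
  match w with
  | [::] => uv
  | (s, lo) :: w' =>
      let m := Mid pre s in
      ends_aux (rcons pre (s, lo)) (if lo then (m, uv.2) else (uv.1, m)) w'
  end.
Definition ends (w : seq letter) : vtx * vtx := ends_aux [::] (Top, Bot) w.

(* The subdiamond of D_n evolved from the edge w of D_(size w), size w <= n: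
   its edges are the edges of D_n whose word extends w. *)
Definition sub_top (w : seq letter) : vtx := (ends w).1.
Definition sub_bot (w : seq letter) : vtx := (ends w).2.
Definition sub_left (w : seq letter) : vtx := Mid w false.
Definition sub_right (w : seq letter) : vtx := Mid w true.

Definition adjS (n : nat) (w : seq letter) (x y : vtx) : Prop :=
  exists u : seq letter, size u = n /\ take (size w) u = w /\
    (ends u = (x, y) \/ ends u = (y, x)).

Definition adj (n : nat) (x y : vtx) : Prop :=
  exists u : seq letter, size u = n /\ (ends u = (x, y) \/ ends u = (y, x)).

Fixpoint ppath (e : vtx -> vtx -> Prop) (x : vtx) (p : seq vtx) : Prop :=
  match p with
  | [::] => True
  | y :: p' => e x y /\ ppath e y p'
  end.

Definition is_dist (n : nat) (x y : vtx) (d : nat) : Prop :=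
  (exists p, ppath (adj n) x p /\ last x p = y /\ size p = d) /\
  (forall p, ppath (adj n) x p -> last x p = y -> d <= size p).

(* a cycle of D_n, given by its cyclic sequence of (distinct) vertices;
   its length (number of edges) is size c *)
Definition is_cycle (n : nat) (c : seq vtx) : Prop :=
  3 <= size c /\ uniq c /\
  exists x p, c = x :: p /\ ppath (adj n) x (rcons p x).

Definition same_cycle (c d : seq vtx) : Prop :=
  exists k, c = rot k d \/ c = rot k (rev d).

Definition principal_cycle (n : nat) (w : seq letter) (c : seq vtx) : Prop :=
  size w < n /\ is_cycle n c /\
  exists q1 r : seq vtx,
    ppath (adjS n w) (sub_top w) q1 /\ last (sub_top w) q1 = sub_bot w /\
    sub_left w \in q1 /\
    ppath (adjS n w) (sub_bot w) (rcons r (sub_top w)) /\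
    sub_right w \in r /\
    same_cycle c (sub_top w :: q1 ++ r).

Definition sub_height (n : nat) (w : seq letter) (h : nat) : Prop :=
  is_dist n (sub_top w) (sub_bot w) h.

(* Main.v *)
Require Import Defs.
From HB Require Import structures.
From mathcomp Require Import all_boot zify.
From Stdlib Require Import Classical.
Set Implicit Arguments. Unset Strict Implicit. Unset Printing Implicit Defensive.

Section PP.
Variable e : vtx -> vtx -> Prop.

Lemma ppath_cat x p q : ppath e x (p ++ q) <-> ppath e x p /\ ppath e (last x p) q.
Proof.
elim: p x => [|y p IH] x /=; first by split => // [[]].
rewrite IH; tauto.
Qed.

Lemma ppath_rcons x p y : ppath e x (rcons p y) <-> ppath e x p /\ e (last x p) y.
Proof. rewrite -cats1 ppath_cat /=; tauto. Qed.

Lemma ppath_mono (e' : vtx -> vtx -> Prop) x p :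
  (forall a b, a \in x :: p -> b \in x :: p -> e a b -> e' a b) ->
  ppath e x p -> ppath e' x p.
Proof.
elim: p x => [|y p IH] x //= H [Hxy Hp]; split.
  by apply: H => //; rewrite !inE eqxx ?orbT.
apply: IH Hp => a b Ha Hb; apply: H; rewrite inE ?Ha ?Hb orbT //.
Qed.

Hypothesis esym : forall a b, e a b -> e b a.

Lemma ppath_rev x q y : ppath e x (rcons q y) -> ppath e y (rcons (rev q) x).
Proof.
elim: q x => [|a q IH] x /=; first by move=> [H _]; split => //; apply: esym.
move=> [Hxa Hq]; rewrite rev_cons ppath_rcons last_rcons; split; first exact: IH.
exact: esym.
Qed.

Lemma cross (P : pred vtx) x q : ppath e x q -> P x -> ~~ P (last x q) ->
  exists a b, [/\ a \in x :: q, b \in q, e a b, P a & ~~ P b].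
Proof.
elim: q x => [|y q IH] x /=; first by move=> _ ->.
move=> [Hxy Hq] Px Hl.
case Py: (P y).
  have [a [b [H1 H2 H3 H4 H5]]] := IH y Hq Py Hl.
  exists a, b; split => //; rewrite ?inE ?H1 ?H2 ?orbT //.
  by move: H1; rewrite inE => /orP [/eqP->|->]; rewrite ?eqxx ?orbT.
exists x, y; split => //; rewrite ?inE ?eqxx ?orbT ?Py //.
Qed.

Lemma region (P : pred vtx) x q : ppath e x q -> P x ->
  (forall a b, a \in x :: q -> b \in x :: q -> e a b -> P a -> ~~ P b -> False) ->
  forall z, z \in x :: q -> P z.
Proof.
elim: q x => [|y q IH] x /=.
  by move=> _ Px _ z; rewrite inE => /eqP->.
move=> [Hxy Hq] Px H.
have Py : P y.
  apply/negPn/negP => Hn; apply: (H x y) => //; rewrite !inE eqxx ?orbT //.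
move=> z; rewrite inE => /orP [/eqP->//|Hz].
apply: IH Hq Py _ z Hz => a b Ha Hb; apply: H; rewrite inE ?Ha ?Hb orbT //.
Qed.

Lemma cyc_rot x p y : ppath e x (rcons p x) -> y \in x :: p ->
  exists k p', [/\ k < size (x :: p), rot k (x :: p) = y :: p' & ppath e y (rcons p' y)].
Proof.
move=> Hc; rewrite inE => /orP [/eqP->|Hy]; first by exists 0, p; rewrite rot0.
case/splitPr: Hy Hc => A B.
exists (size A).+1, (B ++ x :: A); split.
- by rewrite /= size_cat /=; lia.
- by rewrite /rot /= drop_size_cat // take_size_cat.
have [HA [Hy HB]] : ppath e x A /\ e (last x A) y /\ ppath e y (rcons B x).
  by move: Hc; rewrite rcons_cat ppath_cat /=.
rewrite rcons_cat ppath_cat /=.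
have [HB' HBx] := (ppath_rcons _ _ _).1 HB.
split => //; split => //.
move: HA Hy; clear.
elim: A x => [|a A IH] x /=; first by move=> _ ?; split.
by move=> [? ?] ?; split => //; apply: IH.
Qed.

Lemma mem_sub1 (a y z : vtx) A B : a \in y :: rcons A z -> a \in y :: A ++ z :: B.
Proof. by rewrite !inE mem_cat mem_rcons !inE; case/or3P => ->; rewrite ?orbT. Qed.
Lemma mem_sub2 (a y z : vtx) A B : a \in rcons A z -> a \in y :: A ++ z :: B.
Proof. by rewrite !inE mem_cat mem_rcons !inE; case/orP => ->; rewrite ?orbT. Qed.
Lemma mem_sub3 (a y z : vtx) A B : a \in y :: rcons (rev B) z -> a \in y :: A ++ z :: B.
Proof. by rewrite !inE mem_cat mem_rcons !inE mem_rev; case/or3P => ->; rewrite ?orbT. Qed.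
Lemma mem_sub4 (a y z : vtx) A B : a \in rcons (rev B) z -> a \in y :: A ++ z :: B.
Proof. by rewrite !inE mem_cat mem_rcons !inE mem_rev; case/orP => ->; rewrite ?orbT. Qed.

Lemma sep (P : pred vtx) K x p : ppath e x (rcons p x) -> uniq (x :: p) ->
  (forall a b, a \in x :: p -> b \in x :: p -> e a b -> P a -> ~~ P b -> b = K) ->
  forall y z, y \in x :: p -> P y -> z \in x :: p -> P z || (z == K).
Proof.
move=> Hc Hu HK y z Hy Py Hz; apply/negPn/negP; rewrite negb_or => /andP [nPz nzK].
have [k [p' [_ Hr Hc']]] := cyc_rot Hc Hy.
have Hu' : uniq (y :: p') by rewrite -Hr rot_uniq.
have Hm : forall w, w \in y :: p' -> w \in x :: p by move=> w; rewrite -Hr mem_rot.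
have : z \in y :: p' by rewrite -Hr mem_rot.
rewrite inE => /orP [/eqP Ezy|Hz']; first by move: nPz; rewrite Ezy Py.
case/splitPr: Hz' Hc' Hu' Hm => A B.
rewrite rcons_cat ppath_cat /= => [[HA [HAz HB]]] Hu' Hm.
have HA' : ppath e y (rcons A z) by rewrite ppath_rcons.
have HB' := ppath_rev HB.
have [a [b [Ha Hb Hab Pa Pb]]] : exists a b, [/\ a \in y :: rcons A z, b \in rcons A z, e a b, P a & ~~ P b].
  by apply: cross => //; rewrite last_rcons.
have bK : b = K.
  by apply: HK Hab Pa Pb; apply: Hm; [apply: mem_sub1 | apply: mem_sub2].
have [a' [b' [Ha' Hb' Hab' Pa' Pb']]] : exists a b, [/\ a \in y :: rcons (rev B) z, b \in rcons (rev B) z, e a b, P a & ~~ P b].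
  by apply: cross => //; rewrite last_rcons.
have bK' : b' = K.
  by apply: HK Hab' Pa' Pb'; apply: Hm; [apply: mem_sub3 | apply: mem_sub4].
have nKz : (K == z) = false by rewrite eq_sym (negbTE nzK).
move: Hb Hb'; rewrite bK bK' !mem_rcons !inE nKz /= mem_rev => KA KB.
move: Hu' => /andP [_]; rewrite cat_uniq => /and3P [_ /hasPn H _].
by move: (H K); rewrite inE KB orbT => /(_ isT); rewrite KA.
Qed.

End PP.

Lemma ends_aux_cat pre uv v z :
  ends_aux pre uv (v ++ z) = ends_aux (pre ++ v) (ends_aux pre uv v) z.
Proof.
elim: v pre uv => [|[s lo] v IH] pre uv /=; first by rewrite cats0.
by rewrite IH cat_rcons.
Qed.

Definition rl (pre : seq letter) (uv : vtx * vtx) (x : vtx) : vtx :=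
  match x with Top => uv.1 | Bot => uv.2 | Mid q s => Mid (pre ++ q) s end.

Lemma ends_aux_rl pre uv0 w q uv :
  ends_aux (pre ++ q) (rl pre uv0 uv.1, rl pre uv0 uv.2) w =
  (rl pre uv0 (ends_aux q uv w).1, rl pre uv0 (ends_aux q uv w).2).
Proof.
elim: w q uv => [|[s lo] w IH] q uv //=.
rewrite -IH -rcons_cat; by case: lo.
Qed.

Lemma ends_cat_rl v z : ends (v ++ z) =
  (rl v (ends v) (ends z).1, rl v (ends v) (ends z).2).
Proof.
rewrite /ends ends_aux_cat /= -ends_aux_rl cats0 /=.
by case: (ends_aux [::] (Top, Bot) v).
Qed.

Lemma ends_rcons v s lo : ends (rcons v (s, lo)) =
  if lo then (Mid v s, (ends v).2) else ((ends v).1, Mid v s).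
Proof. by rewrite -cats1 ends_cat_rl /=; case: lo; rewrite /= cats0. Qed.

Lemma ends_aux_shape pre uv w x :
  x = (ends_aux pre uv w).1 \/ x = (ends_aux pre uv w).2 ->
  x = uv.1 \/ x = uv.2 \/ exists k s, k < size w /\ x = Mid (pre ++ take k w) s.
Proof.
elim: w pre uv => [|[s lo] w IH] pre uv /=; first by case; auto.
move=> /IH [->|[->|[k [s' [Hk ->]]]]].
- case: lo => /=; [right; right; exists 0, s; by rewrite take0 cats0 | by left].
- case: lo => /=; [by right; left | right; right; exists 0, s; by rewrite take0 cats0].
- right; right; exists k.+1, s'; split => //; by rewrite -cat_rcons -cats1 -catA.
Qed.

Lemma ends_shape w x : x = (ends w).1 \/ x = (ends w).2 ->
  x = Top \/ x = Bot \/ exists k s, k < size w /\ x = Mid (take k w) s.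
Proof. by move/ends_aux_shape. Qed.

Fixpoint tl (n : nat) (w : seq letter) : nat :=
  match w with [::] => 0 | (s, lo) :: w' => (if lo then 2 ^ n.-1 else 0) + tl n.-1 w' end.

Definition lev (n : nat) (x : vtx) : nat :=
  match x with Top => 0 | Bot => 2 ^ n | Mid m s => tl n m + 2 ^ (n - size m).-1 end.

Lemma tl_rcons n pre s lo : tl n (rcons pre (s, lo)) =
  tl n pre + (if lo then 2 ^ (n - size pre).-1 else 0).
Proof.
elim: pre n => [|[s' lo'] pre IH] n /=; first by rewrite subn0 addn0.
rewrite IH addnA; congr (_ + _ + (if lo then 2 ^ _ else 0)); lia.
Qed.

Lemma lev_ends_aux n pre uv w : size pre + size w <= n ->
  lev n uv.1 = tl n pre -> lev n uv.2 = tl n pre + 2 ^ (n - size pre) ->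
  lev n (ends_aux pre uv w).1 = tl n (pre ++ w) /\
  lev n (ends_aux pre uv w).2 = tl n (pre ++ w) + 2 ^ (n - size (pre ++ w)).
Proof.
elim: w pre uv => [|[s lo] w IH] pre uv /=; first by rewrite cats0.
move=> Hs H1 H2; rewrite -cat_rcons; apply: IH.
- by rewrite size_rcons; lia.
- rewrite tl_rcons; case: lo => /=; last by rewrite addn0.
  by rewrite addnC.
- rewrite tl_rcons size_rcons; case: lo => /=.
  + rewrite H2 -addnA; congr (_ + _).
    have -> : n - size pre = (n - (size pre).+1).+1 by lia.
    by rewrite expnS mul2n -addnn; congr (2 ^ _ + 2 ^ _); lia.
  + rewrite addn0; congr (_ + 2 ^ _); lia.
Qed.

Lemma lev_ends n w : size w <= n ->
  lev n (ends w).2 = lev n (ends w).1 + 2 ^ (n - size w).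
Proof.
move=> Hw; have [H1 H2] := @lev_ends_aux n [::] (Top, Bot) w Hw erefl
  ltac:(by rewrite /= subn0).
by rewrite /ends H1 H2.
Qed.

Lemma top_neq_bot w : sub_top w != sub_bot w.
Proof.
apply/eqP => E; have := @lev_ends (size w) w (leqnn _).
rewrite -/(sub_bot w) -/(sub_top w) -E subnn expn0; lia.
Qed.

Lemma adjS_irr n v a : ~ adjS n v a a.
Proof.
move=> [u [_ [_ H]]]; have := top_neq_bot u; rewrite /sub_top /sub_bot.
by case: H => ->; rewrite eqxx.
Qed.

Lemma adj_lev n x y : adj n x y -> lev n y <= lev n x + 1.
Proof.
move=> [u [Hu H]]; have := @lev_ends n u (eq_leq Hu); rewrite Hu subnn expn0.
case: H => -> /=; lia.
Qed.

Lemma walk_lev n x p : ppath (adj n) x p -> lev n (last x p) <= lev n x + size p.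
Proof.
elim: p x => [|y p IH] x /=; first by rewrite addn0.
move=> [/adj_lev H /IH]; lia.
Qed.

Lemma adjS_sym n v a b : adjS n v a b -> adjS n v b a.
Proof. by move=> [u [H1 [H2 H3]]]; exists u; split => //; split => //; tauto. Qed.

Lemma adjS_full n v a b : size v = n -> adjS n v a b ->
  (a = sub_top v /\ b = sub_bot v) \/ (a = sub_bot v /\ b = sub_top v).
Proof.
move=> Hv [u [Hu [Ht H]]]; rewrite Hv in Ht; have Euv : u = v by rewrite -Ht -Hu take_size.
by rewrite /sub_top /sub_bot -Euv; case: H => ->; auto.
Qed.

Inductive cls := CTop | CBot | CMid of bool | CIn of bool & bool | COut.
Definition cls_code (k : cls) : nat * (bool * bool) :=
  match k with CTop => (0, (false, false)) | CBot => (1, (false, false))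
  | CMid s => (2, (s, false)) | CIn s lo => (3, (s, lo)) | COut => (4, (false, false)) end.
Definition cls_decode (c : nat * (bool * bool)) : cls :=
  match c with (0, _) => CTop | (1, _) => CBot | (2, (s, _)) => CMid s
  | (3, (s, lo)) => CIn s lo | _ => COut end.
Lemma cls_codeK : cancel cls_code cls_decode. Proof. by case. Qed.
HB.instance Definition _ := Equality.copy cls (can_type cls_codeK).

Definition cl (v : seq letter) (x : vtx) : cls :=
  if x == sub_top v then CTop else if x == sub_bot v then CBot else
  match x with
  | Mid m s => if m == v then CMid s else
      if (size v < size m) && (take (size v) m == v) then
        CIn (nth (true, true) m (size v)).1 (nth (true, true) m (size v)).2
      else COut
  | _ => COut end.

Definition inspan (a : letter) (k : cls) : bool :=
  match k with CTop => ~~ a.2 | CBot => a.2 | CMid s => s == a.1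
  | CIn s lo => (s == a.1) && (lo == a.2) | COut => false end.

Definition cornc (b : bool) := if b then CBot else CTop.
Definition cornv v (b : bool) := if b then sub_bot v else sub_top v.

Lemma cl_top v : cl v (sub_top v) = CTop.
Proof. by rewrite /cl eqxx. Qed.
Lemma cl_bot v : cl v (sub_bot v) = CBot.
Proof. by rewrite /cl eq_sym (negbTE (top_neq_bot v)) eqxx. Qed.
Lemma cl_corn v b : cl v (cornv v b) = cornc b.
Proof. by case: b; rewrite ?cl_top ?cl_bot. Qed.

Lemma mid_neq_ends v s : Mid v s != sub_top v /\ Mid v s != sub_bot v.
Proof.
have H : forall x, x = (ends v).1 \/ x = (ends v).2 -> Mid v s != x.
  move=> x /ends_shape [->|[->|[k [s' [Hk ->]]]]] //.
  apply/eqP => [[E _]]; move: Hk; have := congr1 size E; rewrite size_take.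
  case: ifP => H0; lia.
by split; apply: H; auto.
Qed.

Lemma cl_mid v s : cl v (Mid v s) = CMid s.
Proof.
have [H1 H2] := mid_neq_ends v s.
by rewrite /cl (negbTE H1) (negbTE H2) eqxx.
Qed.

Lemma cl_topE v x : cl v x = CTop -> x = sub_top v.
Proof.
rewrite /cl; case: eqP => // _; case: eqP => // _; case: x => // m s.
by case: eqP => // _; case: ifP.
Qed.
Lemma cl_botE v x : cl v x = CBot -> x = sub_bot v.
Proof.
rewrite /cl; case: eqP => // _; case: eqP => // _; case: x => // m s.
by case: eqP => // _; case: ifP.
Qed.
Lemma cl_midE v x s : cl v x = CMid s -> x = Mid v s.
Proof.
rewrite /cl; case: eqP => // _; case: eqP => // _; case: x => // m s'.
by case: eqP => [-> [->]|_] //; case: ifP.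
Qed.
Lemma cl_cornE v x b : cl v x = cornc b -> x = cornv v b.
Proof. by case: b; [apply: cl_botE | apply: cl_topE]. Qed.

Lemma deep_neq_ends v m s : size v < size m -> Mid m s != sub_top v /\ Mid m s != sub_bot v.
Proof.
move=> Hm.
have H : forall x, x = (ends v).1 \/ x = (ends v).2 -> Mid m s != x.
  move=> x /ends_shape [->|[->|[k [s' [Hk ->]]]]] //.
  apply/eqP => [[E _]]; move: Hk Hm; have := congr1 size E; rewrite size_take.
  case: ifP => H0; lia.
by split; apply: H; auto.
Qed.

Lemma cl_in v a t s : cl v (Mid (v ++ a :: t) s) = CIn a.1 a.2.
Proof.
have Hs : size v < size (v ++ a :: t) by rewrite size_cat /=; lia.
have [H1 H2] := deep_neq_ends s Hs.
rewrite /cl (negbTE H1) (negbTE H2).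
have -> : (v ++ a :: t == v) = false.
  by apply/eqP => E; move: Hs; rewrite E ltnn.
by rewrite Hs take_size_cat //= eqxx nth_cat ltnn subnn.
Qed.

Lemma endpoint_cl v a z x :
  x = (ends (rcons v a ++ z)).1 \/ x = (ends (rcons v a ++ z)).2 -> inspan a (cl v x).
Proof.
rewrite ends_cat_rl /=.
have key : forall y, y = (ends z).1 \/ y = (ends z).2 ->
    inspan a (cl v (rl (rcons v a) (ends (rcons v a)) y)).
  move=> y /ends_shape [->|[->|[k [s' [_ ->]]]]] /=.
  - case: a => s lo; rewrite ends_rcons; case: lo => /=;
      by rewrite ?cl_mid ?cl_top /= ?eqxx.
  - case: a => s lo; rewrite ends_rcons; case: lo => /=;
      by rewrite ?cl_mid ?cl_bot /= ?eqxx.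
  - by rewrite cat_rcons cl_in /= !eqxx.
by case=> ->; apply: key; auto.
Qed.

Lemma SL n v x y : adjS n v x y -> size v < n ->
  exists a, [/\ inspan a (cl v x), inspan a (cl v y) & adjS n (rcons v a) x y].
Proof.
move=> [u [Hu [Ht H]]] Hv.
set a := nth (true, true) u (size v).
have Ht' : take (size v).+1 u = rcons v a by rewrite (take_nth (true, true)) ?Ht // Hu.
have Eu : u = rcons v a ++ drop (size v).+1 u by rewrite -Ht' cat_take_drop.
exists a; split.
- by apply: (@endpoint_cl v a (drop (size v).+1 u)); rewrite -Eu; case: H => ->; auto.
- by apply: (@endpoint_cl v a (drop (size v).+1 u)); rewrite -Eu; case: H => ->; auto.
by exists u; rewrite size_rcons Ht'.
Qed.

Definition is_corner (k : cls) : bool :=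
  match k with CTop | CBot | CMid _ => true | _ => false end.

Lemma span_inter a b k k' : a != b -> inspan a k -> inspan b k ->
  inspan a k' -> inspan b k' -> k = k' /\ is_corner k.
Proof.
case: a => [s1 l1]; case: b => [s2 l2].
by case: k => [| |[]|[] []|]; case: k' => [| |[]|[] []|]; case: s1; case: l1; case: s2; case: l2.
Qed.

Lemma cl_corner_eq v x y : cl v x = cl v y -> is_corner (cl v x) -> x = y.
Proof.
case E: (cl v x) => [| |s| |] // E' _.
- by rewrite (cl_topE E) (cl_topE (esym E')).
- by rewrite (cl_botE E) (cl_botE (esym E')).
- by rewrite (cl_midE E) (cl_midE (esym E')).
Qed.

Lemma Xedge n v a x y : size v < n -> adjS n v x y -> inspan a (cl v x) ->
  inspan a (cl v y) -> adjS n (rcons v a) x y.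
Proof.
move=> Hv Hxy Ha1 Ha2; have [b [Hb1 Hb2 Hb]] := SL Hxy Hv.
case: (eqVneq a b) => [->//|nab].
have [E C] := span_inter nab Ha1 Hb1 Ha2 Hb2.
by move: Hxy; rewrite (cl_corner_eq E C) => /adjS_irr.
Qed.

Definition halfb (s : bool) (k : cls) : bool :=
  (k == CMid s) || (k == CIn s false) || (k == CIn s true).

Lemma F2 c k k' s : inspan c k -> inspan c k' -> halfb s k -> ~~ halfb s k' ->
  k' = CTop \/ k' = CBot.
Proof.
by case: c => [[] []]; case: s; case: k => [| |[]|[] []|]; case: k' => [| |[]|[] []|]; auto.
Qed.
Lemma F3 c s l l' : inspan c (CIn s l) -> inspan c (CIn s l') -> l = l'.
Proof. by case: c => [[] []]; case: s; case: l; case: l'. Qed.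
Lemma F4 c : inspan c CTop -> inspan c CBot -> False.
Proof. by case: c => [[] []]. Qed.
Lemma F5 c k : inspan c CTop -> inspan c k -> k != CTop -> halfb c.1 k && (k != CIn c.1 true).
Proof. by case: c => [[] []]; case: k => [| |[]|[] []|]. Qed.
Lemma F6 c k : inspan c CBot -> inspan c k -> k != CBot -> halfb c.1 k && (k != CIn c.1 false).
Proof. by case: c => [[] []]; case: k => [| |[]|[] []|]. Qed.
Lemma F7 c k : inspan c k -> k != CTop -> k != CBot -> halfb c.1 k.
Proof. by case: c => [[] []]; case: k => [| |[]|[] []|]. Qed.
Lemma F8 c s l k : inspan c (CIn s l) -> inspan c k -> k != CIn s l -> k = CMid s \/ k = cornc l.
Proof. by case: c => [[] []]; case: s; case: l; case: k => [| |[]|[] []|]; auto. Qed.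
Lemma F9 s l k : (halfb s k && (k != CIn s l)) || (k == cornc (~~ l)) -> inspan (s, ~~ l) k.
Proof. by case: s; case: l; case: k => [| |[]|[] []|]. Qed.
Lemma F10 s l k : (k == CIn s l) || (k == CMid s) -> inspan (s, l) k.
Proof. by case: s; case: l; case: k => [| |[]|[] []|]. Qed.
Lemma F11 c s : inspan c (CIn s false) -> inspan c CBot -> False.
Proof. by case: c => [[] []]; case: s. Qed.
Lemma F12 s k : halfb s k -> k != CMid s -> (k == CIn s false) || (k == CIn s true).
Proof. by case: s; case: k => [| |[]|[] []|]. Qed.
Lemma F13 c : inspan c COut -> False.
Proof. by case: c => [[] []]. Qed.

Lemma F17 c s k k' : inspan c k -> inspan c k' -> (k == CIn s false) || (k == CIn s true) ->
  (k' == CIn s false) || (k' == CIn s true) -> k = k'.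
Proof. by case: c => [[] []]; case: s; case: k => [| |[]|[] []|]; case: k' => [| |[]|[] []|]. Qed.
Lemma F15 c s k : inspan c CBot -> inspan c k -> (k == CIn s false) || (k == CIn s true) -> k = CIn s true.
Proof. by case: c => [[] []]; case: s; case: k => [| |[]|[] []|]. Qed.
Lemma F16 c s k : inspan c CTop -> inspan c k -> (k == CIn s false) || (k == CIn s true) -> k = CIn s false.
Proof. by case: c => [[] []]; case: s; case: k => [| |[]|[] []|]. Qed.

Section Sub.
Variables (n : nat) (v : seq letter).
Hypothesis Hv : size v < n.
Local Notation e := (adjS n v).

Lemma arc p1 : ppath e (sub_top v) (rcons p1 (sub_bot v)) ->
  sub_top v \notin p1 -> sub_bot v \notin p1 ->
  exists s, (forall z, z \in p1 -> halfb s (cl v z)) /\ Mid v s \in p1.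
Proof.
case: p1 => [|y1 t] /=.
  move=> [H _] _ _; have [c [H1 H2 _]] := SL H Hv.
  by rewrite cl_top cl_bot in H1 H2; case: (F4 H1 H2).
move=> [Hy1 Hrest] Ht Hb.
have [c [H1 H2 _]] := SL Hy1 Hv; rewrite cl_top in H1.
have ny1 : cl v y1 != CTop.
  by apply/eqP => /cl_topE E; move: Ht; rewrite E inE eqxx.
have /andP [Hh1 Hn1] := F5 H1 H2 ny1.
set s := c.1 in Hh1 Hn1.
have [Hpt Hlast] := (ppath_rcons _ _ _ _).1 Hrest.
have Hall : forall z, z \in y1 :: t -> halfb s (cl v z).
  apply: (region Hpt) => // a b Ha Hb' Hab Pa Pb.
  have [c' [K1 K2 _]] := SL Hab Hv.
  case: (F2 K1 K2 Pa Pb) => [/cl_topE E|/cl_botE E].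
  - by move: Ht; rewrite -E Hb'.
  - by move: Hb; rewrite -E Hb'.
exists s; split => //.
case Hm: (Mid v s \in y1 :: t) => //.
have nM : forall z, z \in y1 :: t -> cl v z != CMid s.
  by move=> z Hz; apply/eqP => /cl_midE E; move: Hm; rewrite -E Hz.
have Hy1f : cl v y1 == CIn s false.
  have := F12 (Hall y1 (mem_head _ _)) (nM y1 (mem_head _ _)).
  by case/orP => // E; move: Hn1; rewrite E.
have Hf : forall z, z \in y1 :: t -> cl v z == CIn s false.
  apply: (region Hpt) => // a b Ha Hb' Hab Pa Pb.
  have := F12 (Hall b Hb') (nM b Hb'); rewrite (negbTE Pb) /= => /eqP Eb.
  have [c' [K1 K2 _]] := SL Hab Hv; move/eqP: Pa => Ea.
  by rewrite Ea in K1; rewrite Eb in K2; have := F3 K1 K2.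
have [c' [K1 K2 _]] := SL Hlast Hv.
rewrite cl_bot (eqP (Hf _ (mem_last _ _))) in K1 K2.
by case: (F11 K1 K2).
Qed.

Lemma mono s y t : ppath e y t ->
  (forall z, z \in y :: t -> (cl v z == CIn s false) || (cl v z == CIn s true)) ->
  forall z, z \in y :: t -> cl v z = cl v y.
Proof.
move=> Hp Hin z Hz; apply/eqP; move: z Hz.
apply: (region (P := fun z => cl v z == cl v y) Hp) => // a b Ha Hb Hab /eqP Pa Pb.
have [c [K1 K2 _]] := SL Hab Hv.
have E := F17 K1 K2 (Hin a Ha) (Hin b Hb).
by move: Pb; rewrite -E Pa eqxx.
Qed.

End Sub.

Lemma sub_top_rcons v s lo : sub_top (rcons v (s, lo)) = if lo then Mid v s else sub_top v.
Proof. by rewrite /sub_top ends_rcons; case: lo. Qed.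
Lemma sub_bot_rcons v s lo : sub_bot (rcons v (s, lo)) = if lo then sub_bot v else Mid v s.
Proof. by rewrite /sub_bot ends_rcons; case: lo. Qed.

Lemma geo n k : forall v q, n - size v = k -> size v <= n ->
  ppath (adjS n v) (sub_top v) q -> last (sub_top v) q = sub_bot v ->
  uniq (sub_top v :: q) -> size q = 2 ^ k.
Proof.
elim: k => [|k IH] v q Hk Hvn Hp Hl Hu.
  have Hvs : size v = n by lia.
  have tb := top_neq_bot v.
  case: q Hp Hl Hu => [|y q] /=; first by move=> _ E; move: tb; rewrite E eqxx.
  move=> [Hy Hq] Hl Hu; case: (adjS_full Hvs Hy) => [[_ Ey]|[E _]]; last first.
    by move: tb; rewrite E eqxx.
  subst y; case: q Hq Hl Hu => [|z q] //= [Hz _] _ Hu.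
  case: (adjS_full Hvs Hz) => [[E _]|[_ Ez]]; first by move: tb; rewrite E eqxx.
  by move: Hu; rewrite Ez !inE eqxx !orbT.
have Hv : size v < n by lia.
have tb := top_neq_bot v.
case/lastP: q Hp Hl Hu => [|p1 z]; first by move=> _ /= E; move: tb; rewrite E eqxx.
rewrite last_rcons => Hp Ez Hu; subst z.
have Htp : sub_top v \notin p1.
  by move: Hu; rewrite cons_uniq mem_rcons inE negb_or => /andP [/andP [_ ->]].
have Hbp : sub_bot v \notin p1.
  by move: Hu; rewrite cons_uniq rcons_uniq => /and3P [].
have [s [Hh Hm]] := arc Hv Hp Htp Hbp.
case/splitPr: Hm Hp Hu Hh Htp Hbp => A B Hp Hu Hh Htp Hbp.
set M := Mid v s in Hp Hu Hh Htp Hbp *.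
have [HA HB] : ppath (adjS n v) (sub_top v) (rcons A M) /\ ppath (adjS n v) M (rcons B (sub_bot v)).
  move: Hp; rewrite rcons_cat ppath_cat /= => [[H1 [H2 H3]]].
  by split => //; rewrite ppath_rcons.
have Eseq : sub_top v :: rcons (A ++ M :: B) (sub_bot v) = (sub_top v :: A) ++ M :: rcons B (sub_bot v).
  by rewrite rcons_cat.
move: Hu; rewrite Eseq cat_uniq => /and3P [UA /hasPn HnA UB].
have MA : M \notin sub_top v :: A.
  by apply: (HnA M); rewrite mem_head.
have UA' : uniq (sub_top v :: rcons A M).
  by rewrite -cats1 -cat_cons cat_uniq UA /= orbF MA.
have nMA : forall z, z \in A -> cl v z != CMid s.
  move=> z Hz; apply/eqP => /cl_midE Ez; move: MA; rewrite /M -Ez inE negb_or Hz.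
  by rewrite andbF.
have nMB : forall z, z \in B -> cl v z != CMid s.
  move=> z Hz; apply/eqP => /cl_midE Ez; move: UB; rewrite /M cons_uniq mem_rcons inE -Ez Hz.
  by rewrite orbT.
have InA : forall z, z \in A -> (cl v z == CIn s false) || (cl v z == CIn s true).
  by move=> z Hz; apply: F12 (nMA z Hz); apply: Hh; rewrite mem_cat Hz.
have InB : forall z, z \in B -> (cl v z == CIn s false) || (cl v z == CIn s true).
  by move=> z Hz; apply: F12 (nMB z Hz); apply: Hh; rewrite mem_cat inE Hz !orbT.
have SA : forall z, z \in sub_top v :: rcons A M -> inspan (s, false) (cl v z).
  move=> z; rewrite inE mem_rcons inE => /orP [/eqP ->|/orP [/eqP ->|Hz]].
  - by rewrite cl_top.
  - by rewrite cl_mid /= eqxx.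
  move: Hz; destruct A as [|y1 t]; first by [].
  move=> Hz; move: HA => /= [Hy1 Ht].
  have [c [K1 K2 _]] := SL Hy1 Hv; rewrite cl_top in K1.
  have Ey1 := F16 K1 K2 (InA y1 (mem_head _ _)).
  have Ht' : ppath (adjS n v) y1 t by have [] := (ppath_rcons _ _ _ _).1 Ht.
  by rewrite (mono Hv Ht' InA Hz) Ey1 /= !eqxx.
have HA' : ppath (adjS n (rcons v (s, false))) (sub_top v) (rcons A M).
  by apply: ppath_mono HA => a b Ha Hb Hab; apply: Xedge => //; apply: SA.
have szA : size (rcons A M) = 2 ^ k.
  apply: (IH (rcons v (s, false))); rewrite ?size_rcons ?sub_top_rcons ?sub_bot_rcons ?last_rcons //; lia.
have SB : forall z, z \in M :: rcons B (sub_bot v) -> inspan (s, true) (cl v z).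
  move=> z; rewrite inE mem_rcons inE => /orP [/eqP ->|/orP [/eqP ->|Hz]].
  - by rewrite cl_mid /= eqxx.
  - by rewrite cl_bot.
  move: Hz; destruct B as [|y1 t]; first by [].
  move=> Hz; move: HB => /= [Hy1 Ht].
  have [Ht' Hl'] := (ppath_rcons _ _ _ _).1 Ht.
  have [c [K1 K2 _]] := SL Hl' Hv; rewrite cl_bot in K2.
  have El := F15 K2 K1 (InB _ (mem_last _ _)).
  by rewrite (mono Hv Ht' InB Hz) -(mono Hv Ht' InB (mem_last _ _)) El /= !eqxx.
have HB' : ppath (adjS n (rcons v (s, true))) M (rcons B (sub_bot v)).
  by apply: ppath_mono HB => a b Ha Hb Hab; apply: Xedge => //; apply: SB.
have szB : size (rcons B (sub_bot v)) = 2 ^ k.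
  apply: (IH (rcons v (s, true))); rewrite ?size_rcons ?sub_top_rcons ?sub_bot_rcons ?last_rcons //; lia.
move: szA szB; rewrite !size_rcons size_cat /= expnS; lia.
Qed.

Lemma memc (a x : vtx) p : a \in x :: rcons p x -> a \in x :: p.
Proof. by rewrite !inE mem_rcons inE; case/orP => [->|/orP [->|->]]; rewrite ?orbT. Qed.

Lemma vert_edge (e : vtx -> vtx -> Prop) x p y : ppath e x (rcons p y) ->
  forall z, z \in x :: p -> exists z', e z z'.
Proof.
elim: p x => [|a p IH] x /=.
  by move=> [H _] z; rewrite inE => /eqP ->; exists y.
move=> [H1 H2] z; rewrite inE => /orP [/eqP ->|Hz]; first by exists a.
exact: IH H2 z Hz.
Qed.

Section Cyc.
Variables (n : nat) (v : seq letter) (x : vtx) (p : seq vtx).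
Hypothesis Hv : size v < n.
Hypothesis Hc : ppath (adjS n v) x (rcons p x).
Hypothesis Hu : uniq (x :: p).
Hypothesis Hsz : 2 <= size p.
Hypothesis Hnot : forall a, ~ ppath (adjS n (rcons v a)) x (rcons p x).

Lemma child_of a : (forall z, z \in x :: p -> inspan a (cl v z)) ->
  ppath (adjS n (rcons v a)) x (rcons p x).
Proof.
move=> H; apply: ppath_mono Hc => a' b' Ha Hb Hab.
by apply: Xedge => //; apply: H; apply: memc.
Qed.

Lemma vert_ok z : z \in x :: p -> cl v z != COut.
Proof.
move=> Hz; have [z' Hzz] := vert_edge Hc Hz.
have [c [K1 _ _]] := SL Hzz Hv.
by apply/eqP => E; rewrite E in K1; case: (F13 K1).
Qed.

Lemma corner_in b : cornv v b \in x :: p.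
Proof.
case Hb: (cornv v b \in x :: p) => //; exfalso.
have notc : forall z, z \in x :: p -> cl v z != cornc b.
  by move=> z Hz; apply/eqP => /cl_cornE E; move: Hb; rewrite -E Hz.
pose K := cornv v (~~ b).
have [y [Hy HyK]] : exists y, y \in x :: p /\ y != K.
  case: p Hsz Hu => [|y0 t] // _ /andP [Hx _].
  case: (eqVneq x K) => [Ex|nx]; last by exists x; rewrite mem_head.
  exists y0; split; first by rewrite !inE eqxx orbT.
  by apply/eqP => E; move: Hx; rewrite Ex -E mem_head.
have nT : cl v y != CTop.
  apply/eqP => E; move: (notc y Hy) HyK; rewrite /K E (cl_topE E).
  by case: b {notc Hb K} => /=; rewrite ?eqxx.
have nB : cl v y != CBot.
  apply/eqP => E; move: (notc y Hy) HyK; rewrite /K E (cl_botE E).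
  by case: b {notc Hb K nT} => /=; rewrite ?eqxx.
have [c [K1 _ _]] : exists c, [/\ inspan c (cl v y), True & True].
  have [z' Hzz] := vert_edge Hc Hy; have [c [K1 _ _]] := SL Hzz Hv; by exists c.
have Hhy := F7 K1 nT nB; set s := c.1 in Hhy.
have sep1 : forall z, z \in x :: p -> halfb s (cl v z) || (z == K).
  move=> z Hz; apply: (@sep _ (@adjS_sym n v) (fun z => halfb s (cl v z)) K x p Hc Hu _ y z Hy Hhy Hz).
  move=> a b' Ha Hb' Hab Pa Pb.
  have [c' [L1 L2 _]] := SL Hab Hv.
  have Hcb : exists bb, cl v b' = cornc bb.
    by case: (F2 L1 L2 Pa Pb) => E; [exists false | exists true].
  case: Hcb => bb Ebb; case: (eqVneq bb b) => [Eb|nb].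
    by move: (notc b' Hb'); rewrite Ebb Eb eqxx.
  have Ebn : bb = ~~ b by move: nb; clear; case: bb; case: b.
  by move: Ebb; rewrite Ebn => /cl_cornE.
case Hh: (has (fun z => cl v z == CIn s b) (x :: p)).
  case/hasP: Hh => z0 Hz0 Pz0.
  have sep2 : forall z, z \in x :: p -> (cl v z == CIn s b) || (z == Mid v s).
    move=> z Hz; apply: (@sep _ (@adjS_sym n v) (fun z => cl v z == CIn s b) (Mid v s) x p Hc Hu _ z0 z Hz0 Pz0 Hz).
    move=> a b' Ha Hb' Hab /eqP Pa Pb.
    have [c' [L1 L2 _]] := SL Hab Hv; rewrite Pa in L1.
    case: (F8 L1 L2 Pb) => [/cl_midE //|E].
    by move: (notc b' Hb'); rewrite E eqxx.
  apply: (Hnot (a := (s, b))); apply: child_of => z Hz; apply: F10.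
  case/orP: (sep2 z Hz) => [->//|/eqP ->]; by rewrite cl_mid eqxx orbT.
apply: (Hnot (a := (s, ~~ b))); apply: child_of => z Hz; apply: F9.
case/orP: (sep1 z Hz) => [Hhz|/eqP ->]; last by rewrite /K cl_corn eqxx orbT.
move/hasPn: Hh => /(_ z Hz) /= ->; by rewrite Hhz.
Qed.

Lemma rot_back (T : Type) (s : seq T) k : s = rot (size s - k) (rot k s).
Proof. by rewrite -{1}(rotK k s) /rotr size_rot. Qed.

Lemma principal_of : exists q1 r,
  [/\ ppath (adjS n v) (sub_top v) q1, last (sub_top v) q1 = sub_bot v,
      sub_left v \in q1, ppath (adjS n v) (sub_bot v) (rcons r (sub_top v))
      & (sub_right v \in r /\ same_cycle (x :: p) (sub_top v :: q1 ++ r))].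
Proof.
have Ht := corner_in false; have Hb := corner_in true; rewrite /cornv in Ht Hb.
have [k [p' [Hk Hr Hc']]] := cyc_rot Hc Ht.
have Hu' : uniq (sub_top v :: p') by rewrite -Hr rot_uniq.
have tb := top_neq_bot v.
have Hb' : sub_bot v \in p'.
  by move: Hb; rewrite -(mem_rot k) Hr inE eq_sym (negbTE tb).
case/splitPr: Hb' Hr Hc' Hu' => p1 p2 Hr Hc' Hu'.
have [W1 W2] : ppath (adjS n v) (sub_top v) (rcons p1 (sub_bot v)) /\
               ppath (adjS n v) (sub_bot v) (rcons p2 (sub_top v)).
  move: Hc'; rewrite rcons_cat ppath_cat /= => [[H1 [H2 H3]]].
  by split => //; rewrite ppath_rcons.
move: Hu'; rewrite cons_uniq mem_cat inE negb_or negb_or => /andP [/and3P [T1 _ T2]].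
rewrite cat_uniq cons_uniq => /and3P [U1 /hasPn D /andP [B2 U2]].
have B1 : sub_bot v \notin p1.
  by apply/negP => Hbb; move: (D (sub_bot v) (mem_head _ _)); rewrite /= Hbb.
have [s1 [_ M1]] := arc Hv W1 T1 B1.
have W2' := ppath_rev (@adjS_sym n v) W2.
have [s2 [_ M2]] := arc Hv W2' ltac:(by rewrite mem_rev) ltac:(by rewrite mem_rev).
rewrite mem_rev in M2.
have ns : s1 != s2.
  apply/eqP => E; move: (D (Mid v s1)); rewrite inE E M2 orbT => /(_ isT).
  by rewrite /= -E M1.
case: s1 ns M1 => ns M1.
- have Es2 : s2 = false by move: ns; clear; case: s2.
  rewrite Es2 in M2.
  exists (rcons (rev p2) (sub_bot v)), (rev p1); split;
   [exact: W2' | by rewrite last_rcons | by rewrite mem_rcons inE mem_rev M2 orbT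
   | exact (ppath_rev (@adjS_sym n v) W1) | split; [by rewrite mem_rev|]].
  exists (size (x :: p) - k.+1); right.
  have -> : rev (sub_top v :: rcons (rev p2) (sub_bot v) ++ rev p1) = rot k.+1 (x :: p).
    by rewrite -addn1 addnC rotD // Hr rot1_cons rev_cons rev_cat revK rev_rcons revK.
  by rewrite -(size_rot k.+1 (x :: p)) -/(rotr _ _) rotK.
- have Es2 : s2 = true by move: ns; clear; case: s2.
  rewrite Es2 in M2.
  exists (rcons p1 (sub_bot v)), p2; split;
   [exact: W1 | by rewrite last_rcons | by rewrite mem_rcons inE M1 orbT
   | exact: W2 | split; [exact: M2|]].
  exists (size (x :: p) - k); left.
  by rewrite cat_rcons -Hr -rot_back.
Qed.

End Cyc.

Lemma part1 n c : is_cycle n c -> exists w, size w <= n /\ principal_cycle n w c.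
Proof.
move=> Hcyc; have Hcyc' := Hcyc; case: Hcyc => H3 [Hu [x [p [Ec Hp]]]]; subst c.
have Hsz : 2 <= size p by move: H3 => /=; lia.
suff H : forall k v, n - size v = k -> size v <= n -> ppath (adjS n v) x (rcons p x) ->
    exists w, size w <= n /\ principal_cycle n w (x :: p).
  apply: (H (n - size (Nil letter)) [::]) => //.
  by apply: ppath_mono Hp => a b _ _ [u [Hu1 Hu2]]; exists u; rewrite take0.
elim=> [|k IH] v Hk Hvn Hpv.
  have Hvs : size v = n by lia.
  have tb := top_neq_bot v.
  case: p Hsz Hu Hpv {Hp Hcyc' H3} => [|y1 [|y2 t]] // _ Hu /= [H1 [H2 _]].
  have Exy : x = y2.
    case: (adjS_full Hvs H1) => [[-> Ey1]|[-> Ey1]];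
    case: (adjS_full Hvs H2) => [[E1 ->]|[E1 ->]] //;
    by move: tb; rewrite -Ey1 E1 eqxx.
  by move: Hu; rewrite Exy /= !inE eqxx !orbT.
have Hv : size v < n by lia.
case: (Classical_Prop.classic (exists a, ppath (adjS n (rcons v a)) x (rcons p x))) => [[a Ha]|Hn].
  by apply: (IH (rcons v a)) => //; rewrite size_rcons; lia.
have Hnot : forall a, ~ ppath (adjS n (rcons v a)) x (rcons p x).
  by move=> a Ha; apply: Hn; exists a.
exists v; split => //; split => //; split => //.
have [q1 [r [A1 A2 A3 A4 [A5 A6]]]] := principal_of Hv Hpv Hu Hsz Hnot.
by exists q1, r.
Qed.

Lemma part2 n w t c : size w <= n -> sub_height n w (2 ^ t) -> principal_cycle n w c ->
  size c = 2 ^ t.+1.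
Proof.
move=> Hw [[p0 [Hp0 [Hl0 Hs0]]] Hmin] [Hwn [[H3 [Hu _]] [q1 [r [Hq1 [Hl [HL [Hr [HR Hsc]]]]]]]]].
set d := sub_top w :: q1 ++ r in Hsc.
have [Sd Ud] : size c = size d /\ uniq d.
  case: Hsc => k [E|E]; rewrite E in Hu *; split; rewrite ?size_rot ?size_rev //;
  by move: Hu; rewrite rot_uniq ?rev_uniq.
have tb := top_neq_bot w.
move: (Ud); rewrite /d -cat_cons cat_uniq => /and3P [U1 /hasPn D U2].
set K := n - size w.
have Sq1 : size q1 = 2 ^ K by apply: (geo (v := w)).
have Bq1 : sub_bot w \in q1.
  have : last (sub_top w) q1 \in sub_top w :: q1 by apply: mem_last.
  rewrite Hl inE => /orP [/eqP E|//]; by move: tb; rewrite E eqxx.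
have Wr := ppath_rev (@adjS_sym n w) Hr.
have Tr : sub_top w \notin r.
  by apply/negP => Hm; move: (D _ Hm); rewrite mem_head.
have Br : sub_bot w \notin r.
  by apply/negP => Hm; move: (D _ Hm); rewrite inE Bq1 orbT.
have Sr : size (rcons (rev r) (sub_bot w)) = 2 ^ K.
  apply: (geo (v := w)) => //; first by rewrite last_rcons.
  rewrite /= mem_rcons inE mem_rev negb_or tb Tr /= rcons_uniq mem_rev Br rev_uniq.
  by move: Ud; rewrite /d cons_uniq cat_uniq => /andP [_ /and3P [_ _ ->]].
have LB : 2 ^ K <= 2 ^ t.
  have := walk_lev Hp0; rewrite Hl0 Hs0 /sub_bot /sub_top lev_ends // /K; lia.
have UB : 2 ^ t <= 2 ^ K.
  rewrite -Sq1; apply: Hmin => //.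
  by apply: ppath_mono Hq1 => a b _ _ [u [Hu1 [_ Hu3]]]; exists u.
rewrite Sd /d /= size_cat Sq1.
move: Sr; rewrite !size_rcons size_rev => Sr.
rewrite expnS; have E : 2 ^ t = 2 ^ K by lia.
rewrite E; lia.
Qed.

Theorem lemma2p3 (n : nat) :
  (forall c : seq vtx, is_cycle n c ->
     exists w : seq letter, size w <= n /\ principal_cycle n w c) /\
  (forall (w : seq letter) (t : nat) (c : seq vtx),
     size w <= n -> sub_height n w (2 ^ t) -> principal_cycle n w c ->
     size c = 2 ^ t.+1).
Proof. split; [exact: part1 | exact: part2]. Qed.
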